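(* Let $m\ge 1$ and let $P_{\mathcal F}$ be the set of nonzero polynomials of the form $f(z)=\sum_{k=0}^m c_k z^{\underline{k}}$ with all $c_k\in\mathbb R$, $c_k\ge0$. A complex number $w$ is a root of no polynomial in $P_{\mathcal F}$ if and only if $w\in S\cup\overline S$, where $$S=\Big\{z\in\mathbb C \ \Big|\ \mathrm{Arg}\,z\ge0\ \text{and}\ \sum_{i=1}^m\mathrm{Arg}(z-i+1)<\pi\Big\}$$ and $\overline S=\{\bar z\mid z\in S\}$.
   Context: $z^{\underline{k}}=z(z-1)\cdots(z-k+1)$, $z^{\underline 0}=1$. For nonzero $z$, $\mathrm{Arg}\,z$ is the principal argument, $-\pi<\mathrm{Arg}\,z\le\pi$; by convention $\mathrm{Arg}\,0=\infty$ (so any $z$ for which some $z-i+1=0$, $1\le i\le m$, is not in $S$). *)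

(* Defs.v *)
From Stdlib Require Import Reals.
Open Scope R_scope.

Definition Cplx : Type := (R * R)%type.
Definition Cre (z : Cplx) : R := fst z.
Definition Cim (z : Cplx) : R := snd z.
Definition Cadd (z w : Cplx) : Cplx := (Cre z + Cre w, Cim z + Cim w).
Definition Cmul (z w : Cplx) : Cplx :=
  (Cre z * Cre w - Cim z * Cim w, Cre z * Cim w + Cim z * Cre w).
Definition RtoC (r : R) : Cplx := (r, 0).
Definition Cconj (z : Cplx) : Cplx := (Cre z, - Cim z).
Definition C0 : Cplx := (0, 0).
Definition C1 : Cplx := (1, 0).

(* Principal argument of a NONZERO complex number, in (-PI, PI].
   (Value at 0 is irrelevant: the set S below explicitly excludes it,
   implementing the convention Arg 0 = infinity.) *)
Definition Arg (z : Cplx) : R :=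
  let x := Cre z in let y := Cim z in
  if Rlt_dec 0 x then atan (y / x)
  else if Rlt_dec x 0 then
         (if Rle_dec 0 y then atan (y / x) + PI else atan (y / x) - PI)
  else (if Rlt_dec 0 y then PI / 2 else - (PI / 2)).

Fixpoint ffact (z : Cplx) (k : nat) : Cplx :=
  match k with
  | O => C1
  | S k' => Cmul (ffact z k') (Cadd z (RtoC (- INR k')))
  end.

Fixpoint ffpoly (c : nat -> R) (m : nat) (z : Cplx) : Cplx :=
  match m with
  | O => Cmul (RtoC (c O)) (ffact z O)
  | S m' => Cadd (ffpoly c m' z) (Cmul (RtoC (c m)) (ffact z m))
  end.

Definition shift (z : Cplx) (i : nat) : Cplx := Cadd z (RtoC (1 - INR i)).

Fixpoint sumArg (z : Cplx) (m : nat) : R :=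
  match m with
  | O => 0
  | S m' => sumArg z m' + Arg (shift z m)
  end.

(* The set S: Arg z >= 0 and sum_{i=1}^m Arg(z-i+1) < PI, where each
   z-i+1 (1 <= i <= m) must be nonzero (Arg 0 = infinity convention). *)
Definition inS (m : nat) (z : Cplx) : Prop :=
  (forall i : nat, (1 <= i <= m)%nat -> shift z i <> C0) /\
  0 <= Arg z /\ sumArg z m < PI.

(* w is a root of some nonzero polynomial sum_{k<=m} c_k z^{underline k}
   with all c_k >= 0.  Nonzero polynomial <-> some c_k <> 0 since the
   falling factorials form a basis. *)
Definition root_of_PF (m : nat) (w : Cplx) : Prop :=
  exists c : nat -> R,
    (forall k, (k <= m)%nat -> 0 <= c k) /\
    (exists k, (k <= m)%nat /\ c k <> 0) /\
    ffpoly c m w = C0.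

(* Main.v *)
Require Import Defs.
From Stdlib Require Import Reals Lra Lia Classical.
Open Scope R_scope.

Lemma atan_sign t : (0 <= t -> 0 <= atan t) /\ (t <= 0 -> atan t <= 0).
Proof.
  split; intro H.
  - destruct (Req_dec t 0) as [->|Hn]; [rewrite atan_0; lra|].
    rewrite <- atan_0; left; apply atan_increasing; lra.
  - destruct (Req_dec t 0) as [->|Hn]; [rewrite atan_0; lra|].
    rewrite <- atan_0; left; apply atan_increasing; lra.
Qed.

Lemma polar z : z <> C0 -> exists r, 0 < r /\ z = (r * cos (Arg z), r * sin (Arg z)).
Proof.
  destruct z as [x y]; intro Hz. unfold Arg, Cre, Cim; simpl.
  assert (Hs : 0 < sqrt (1 + (y/x)²)) by (apply sqrt_lt_R0; pose proof (Rle_0_sqr (y/x)); lra).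
  destruct (Rlt_dec 0 x) as [Hx|Hx].
  - exists (x * sqrt (1 + (y/x)²)); split; [nra|].
    rewrite cos_atan, sin_atan; f_equal; field; lra.
  - destruct (Rlt_dec x 0) as [Hx'|Hx'].
    + destruct (Rle_dec 0 y).
      * exists (- x * sqrt (1 + (y/x)²)); split; [nra|].
        rewrite neg_cos, neg_sin, cos_atan, sin_atan; f_equal; field; lra.
      * exists (- x * sqrt (1 + (y/x)²)); split; [nra|].
        rewrite cos_minus, sin_minus, cos_PI, sin_PI, cos_atan, sin_atan; f_equal; field; lra.
    + assert (x = 0) by lra; subst x.
      destruct (Rlt_dec 0 y).
      * exists y; split; [lra|]; rewrite cos_PI2, sin_PI2; f_equal; ring.
      * destruct (Req_dec y 0) as [->|Hy]; [exfalso; apply Hz; reflexivity|].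
        exists (-y); split; [lra|]; rewrite cos_neg, sin_neg, cos_PI2, sin_PI2; f_equal; ring.
Qed.

Lemma Arg_range z : 0 <= Cim z -> z <> C0 -> 0 <= Arg z <= PI.
Proof.
  destruct z as [x y]; unfold Arg, Cre, Cim; simpl; intros Hy Hz.
  pose proof (atan_bound (y/x)). pose proof PI_RGT_0.
  destruct (Rlt_dec 0 x) as [Hx|Hx].
  - assert (0 <= y/x) by (unfold Rdiv; assert (0 < / x) by (apply Rinv_0_lt_compat; lra); nra).
    pose proof (proj1 (atan_sign (y/x)) H1). lra.
  - destruct (Rlt_dec x 0) as [Hx'|Hx'].
    + destruct (Rle_dec 0 y); [|lra].
      assert (y/x <= 0).
      { unfold Rdiv. assert (0 < / - x) by (apply Rinv_0_lt_compat; lra).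
        rewrite <- (Ropp_involutive x), Rinv_opp. nra. }
      pose proof (proj2 (atan_sign (y/x)) H1). lra.
    + assert (x = 0) by lra; subst x.
      destruct (Rlt_dec 0 y); [lra|].
      exfalso; apply Hz; assert (y = 0) by lra; subst; reflexivity.
Qed.

Lemma Arg_Im z : 0 <= Arg z -> 0 <= Cim z.
Proof.
  destruct z as [x y]; unfold Arg, Cre, Cim; simpl; intros H.
  pose proof (atan_bound (y/x)). pose proof PI_RGT_0.
  destruct (Rlt_dec 0 x) as [Hx|Hx].
  - destruct (Rle_dec 0 y) as [|Hy]; [auto|exfalso].
    assert (y/x < 0).
    { unfold Rdiv. assert (0 < / x) by (apply Rinv_0_lt_compat; lra). nra. }
    assert (atan (y/x) < 0) by (rewrite <- atan_0; apply atan_increasing; lra). lra.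
  - destruct (Rlt_dec x 0) as [Hx'|Hx'].
    + destruct (Rle_dec 0 y); [auto|lra].
    + destruct (Rlt_dec 0 y); lra.
Qed.

Definition delta (j : nat) (a : R) (i : nat) : R := if Nat.eqb i j then a else 0.

Ltac cc := repeat match goal with u : Cplx |- _ => destruct u end;
  unfold Cadd, Cmul, RtoC, Cconj, C0, Defs.C1, Cre, Cim in *; simpl in *;
  try (f_equal; ring).

Lemma ffpoly_add c1 c2 m z :
  ffpoly (fun i => c1 i + c2 i) m z = Cadd (ffpoly c1 m z) (ffpoly c2 m z).
Proof.
  induction m; simpl.
  - destruct (ffact z 0); cc.
  - rewrite IHm. destruct (ffpoly c1 m z), (ffpoly c2 m z), (ffact z (S m)). cc.
Qed.

Lemma ffpoly_delta_gt j a m z : (m < j)%nat -> ffpoly (delta j a) m z = C0.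
Proof.
  induction m; intro H; cbn [ffpoly].
  - unfold delta; destruct (Nat.eqb_spec 0 j); [lia|]. destruct (ffact z 0); cc.
  - rewrite IHm by lia. unfold delta; destruct (Nat.eqb_spec (S m) j); [lia|].
    destruct (ffact z (S m)); cc.
Qed.

Lemma ffpoly_delta j a m z : (j <= m)%nat ->
  ffpoly (delta j a) m z = Cmul (RtoC a) (ffact z j).
Proof.
  induction m; intro H.
  - assert (j = 0)%nat by lia; subst. simpl. reflexivity.
  - destruct (Nat.eq_dec j (S m)) as [->|Hn].
    + cbn [ffpoly]. rewrite ffpoly_delta_gt by lia. unfold delta; rewrite Nat.eqb_refl.
      destruct (Cmul (RtoC a) (ffact z (S m))); cc.
    + cbn [ffpoly]. rewrite IHm by lia. unfold delta.
      destruct (Nat.eqb_spec (S m) j); [lia|].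
      destruct (ffact z j), (ffact z (S m)); cc.
Qed.

Lemma shift_S w k : shift w (S k) = Cadd w (RtoC (- INR k)).
Proof. unfold shift; rewrite S_INR; replace (1 - (INR k + 1)) with (- INR k) by ring; reflexivity. Qed.

Lemma ffact_polar w k : (forall i, (1 <= i <= k)%nat -> shift w i <> C0) ->
  exists r, 0 < r /\ ffact w k = (r * cos (sumArg w k), r * sin (sumArg w k)).
Proof.
  induction k; intro H.
  - exists 1; split; [lra|]. simpl. unfold Defs.C1; rewrite cos_0, sin_0. f_equal; ring.
  - destruct IHk as [r [Hr E]]; [intros; apply H; lia|].
    destruct (polar (shift w (S k))) as [s [Hs E2]]; [apply H; lia|].
    exists (r * s); split; [nra|].
    simpl. rewrite <- shift_S. set (b := Arg (shift w (S k))) in *.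
    rewrite E, E2. unfold Cmul, Cre, Cim; simpl.
    rewrite cos_plus, sin_plus. f_equal; ring.
Qed.

Lemma Im_shift w i : Cim (shift w i) = Cim w.
Proof. unfold shift, Cadd, RtoC, Cim; simpl; ring. Qed.

Lemma sumArg_step w m : 0 <= Cim w -> (forall i, (1 <= i <= m)%nat -> shift w i <> C0) ->
  forall n, (S n <= m)%nat -> sumArg w n <= sumArg w (S n).
Proof.
  intros Hw H n Hn. simpl.
  assert (0 <= Arg (shift w (S n)) <= PI)
      by (apply Arg_range; [rewrite Im_shift; auto | apply H; lia]). lra.
Qed.

Lemma sumArg_nonneg w m : 0 <= Cim w -> (forall i, (1 <= i <= m)%nat -> shift w i <> C0) ->
  forall n, (n <= m)%nat -> 0 <= sumArg w n.
Proof.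
  intros Hw H n. induction n; intro Hn; [simpl; lra|].
  pose proof (sumArg_step w m Hw H n Hn). pose proof (IHn ltac:(lia)). lra.
Qed.

Lemma sumArg_mono w m : 0 <= Cim w -> (forall i, (1 <= i <= m)%nat -> shift w i <> C0) ->
  forall k n, (k <= n <= m)%nat -> 0 <= sumArg w k <= sumArg w n.
Proof.
  intros Hw H k n. induction n; intro Hkn.
  - assert (k = 0)%nat by lia; subst; simpl; lra.
  - destruct (Nat.eq_dec k (S n)) as [->|Hn].
    + pose proof (sumArg_nonneg w m Hw H (S n) ltac:(lia)). lra.
    + pose proof (sumArg_step w m Hw H n ltac:(lia)). pose proof (IHn ltac:(lia)). lra.
Qed.

Definition Lf (p : R) (v : Cplx) : R := Cre v * cos p + Cim v * sin p.

Lemma Lpos c w p : forall m, (forall k, (k <= m)%nat -> 0 < Lf p (ffact w k)) ->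
  (forall k, (k <= m)%nat -> 0 <= c k) ->
  0 <= Lf p (ffpoly c m w) /\ ((exists k, (k <= m)%nat /\ c k <> 0) -> 0 < Lf p (ffpoly c m w)).
Proof.
  induction m; intros HL Hc.
  - cbn [ffpoly]. assert (E : Lf p (Cmul (RtoC (c 0%nat)) (ffact w 0)) = c 0%nat * Lf p (ffact w 0))
      by (unfold Lf; destruct (ffact w 0); cc; ring).
    rewrite E. pose proof (HL 0%nat (le_n _)). pose proof (Hc 0%nat (le_n _)).
    split; [nra|]. intros [k [Hk Hck]]. assert (k = 0)%nat by lia; subst.
    assert (0 < c 0%nat) by lra. nra.
  - destruct IHm as [I1 I2]; [intros; apply HL; lia|intros; apply Hc; lia|].
    cbn [ffpoly]. assert (E : forall u v a, Lf p (Cadd u (Cmul (RtoC a) v)) = Lf p u + a * Lf p v)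
      by (intros; unfold Lf; cc; ring).
    rewrite E. pose proof (HL (S m) (le_n _)). pose proof (Hc (S m) (le_n _)).
    split; [nra|]. intros [k [Hk Hck]].
    destruct (Nat.eq_dec k (S m)) as [->|Hn].
    + assert (0 < c (S m)) by lra. nra.
    + assert (0 < Lf p (ffpoly c m w)) by (apply I2; exists k; split; [lia|auto]). nra.
Qed.

Lemma key_noroot m w : 0 <= Cim w -> (forall i, (1 <= i <= m)%nat -> shift w i <> C0) ->
  sumArg w m < PI -> ~ root_of_PF m w.
Proof.
  intros Hw H Hs [c [Hc [Hnz E]]].
  set (p := sumArg w m / 2).
  assert (HL : forall k, (k <= m)%nat -> 0 < Lf p (ffact w k)).
  { intros k Hk. destruct (ffact_polar w k) as [r [Hr Ek]]; [intros; apply H; lia|].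
    rewrite Ek. unfold Lf, Cre, Cim; simpl.
    assert (Hm : 0 <= sumArg w k <= sumArg w m) by (apply (sumArg_mono w m); auto).
    assert (0 < cos (sumArg w k - p)) by (apply cos_gt_0; unfold p; lra).
    rewrite cos_minus in H0. nra. }
  destruct (Lpos c w p m HL Hc) as [_ Hp]. specialize (Hp Hnz).
  rewrite E in Hp. unfold Lf, C0, Cre, Cim in Hp; simpl in Hp. lra.
Qed.

Lemma first_cross (f : nat -> R) m : f 0%nat < PI -> PI <= f m ->
  exists k, (k < m)%nat /\ f k < PI /\ PI <= f (S k).
Proof.
  intros H0. induction m; intro Hm; [lra|].
  destruct (Rle_dec PI (f m)) as [Hl|Hl].
  - destruct (IHm Hl) as [k [? ?]]. exists k; split; [lia|auto].
  - exists m; split; [lia|split; [lra|auto]].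
Qed.

Lemma key_root m w : 0 <= Cim w -> (forall i, (1 <= i <= m)%nat -> shift w i <> C0) ->
  PI <= sumArg w m -> root_of_PF m w.
Proof.
  intros Hw H Hs.
  destruct (first_cross (sumArg w) m) as [j [Hj [Ha Hb]]]; [simpl; apply PI_RGT_0|auto|].
  assert (HA : 0 <= Arg (shift w (S j)) <= PI)
      by (apply Arg_range; [rewrite Im_shift; auto | apply H; lia]).
  assert (Hb' : sumArg w (S j) = sumArg w j + Arg (shift w (S j))) by reflexivity.
  pose proof (sumArg_nonneg w m Hw H j ltac:(lia)) as Hj0.
  destruct (ffact_polar w j) as [r1 [Hr1 E1]]; [intros; apply H; lia|].
  destruct (ffact_polar w (S j)) as [r2 [Hr2 E2]]; [intros; apply H; lia|].
  set (a := sumArg w j) in *. set (b := sumArg w (S j)) in *.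
  pose proof PI_RGT_0.
  destruct (Req_dec a 0) as [Ha0|Ha0].
  -
    assert (Hbp : b = PI) by lra.
    exists (fun i => delta 0 1 i + delta (S j) (1 / r2) i).
    split; [|split].
    + intros k _; unfold delta; destruct (Nat.eqb k 0), (Nat.eqb k (S j));
        try lra; assert (0 < 1/r2) by (apply Rdiv_lt_0_compat; lra); lra.
    + exists 0%nat; split; [lia|]. unfold delta; simpl; lra.
    + rewrite ffpoly_add, !ffpoly_delta by lia. rewrite E2, Hbp, cos_PI, sin_PI; cbn [ffact].
      unfold Cadd, Cmul, RtoC, C0, Defs.C1, Cre, Cim; simpl. f_equal; field; lra.
  - set (l := sin (b - a)). set (mu := - sin b / r1). set (nu := sin a / r2).
    assert (Hl : 0 <= l) by (apply sin_ge_0; lra).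
    assert (Hmu : 0 <= mu).
    { unfold mu. assert (sin b <= 0) by (apply sin_le_0; lra).
      unfold Rdiv; assert (0 < / r1) by (apply Rinv_0_lt_compat; lra). nra. }
    assert (Hnu : 0 < nu).
    { unfold nu. apply Rdiv_lt_0_compat; [apply sin_gt_0|]; lra. }
    exists (fun i => delta 0 l i + (delta j mu i + delta (S j) nu i)).
    split; [|split].
    + intros k _; unfold delta; destruct (Nat.eqb k 0), (Nat.eqb k j), (Nat.eqb k (S j)); lra.
    + exists (S j); split; [lia|]. unfold delta.
      replace (Nat.eqb (S j) 0) with false by reflexivity.
      replace (Nat.eqb (S j) j) with false by (symmetry; apply Nat.eqb_neq; lia).
      rewrite Nat.eqb_refl. lra.
    + rewrite ffpoly_add, (ffpoly_add (delta j mu)), !ffpoly_delta by lia.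
      rewrite E1, E2; cbn [ffact];  unfold l, mu, nu. rewrite sin_minus.
      unfold Cadd, Cmul, RtoC, C0, Defs.C1, Cre, Cim; simpl. f_equal; field; lra.
Qed.

Lemma ffact_conj w k : ffact (Cconj w) k = Cconj (ffact w k).
Proof. induction k; simpl. cc. rewrite IHk. destruct (ffact w k), w. cc. Qed.

Lemma ffpoly_conj c m w : ffpoly c m (Cconj w) = Cconj (ffpoly c m w).
Proof.
  induction m; cbn [ffpoly]; rewrite ffact_conj; [|rewrite IHm].
  - destruct (ffact w 0). cc.
  - destruct (ffact w (S m)), (ffpoly c m w). cc.
Qed.

Lemma conj_conj w : Cconj (Cconj w) = w.
Proof. destruct w; unfold Cconj, Cre, Cim; simpl; f_equal; ring. Qed.

Lemma root_conj m w : root_of_PF m w -> root_of_PF m (Cconj w).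
Proof.
  intros [c [H1 [H2 H3]]]. exists c; split; [auto|split; [auto|]].
  rewrite ffpoly_conj, H3. unfold Cconj, C0, Cre, Cim; simpl; f_equal; ring.
Qed.

Lemma shift_conj w i : shift (Cconj w) i = Cconj (shift w i).
Proof. unfold shift; destruct w; cc. Qed.

Lemma conj_nz u : u <> C0 -> Cconj u <> C0.
Proof.
  intros H E; apply H. destruct u; unfold Cconj, C0, Cre, Cim in *; simpl in *.
  injection E; intros; subst; f_equal; lra.
Qed.

Lemma ffact_zero w i k : (1 <= i <= k)%nat -> shift w i = C0 -> ffact w k = C0.
Proof.
  intros Hi Hs. induction k; [lia|].
  cbn [ffact]. destruct (Nat.eq_dec i (S k)) as [->|Hn].
  - rewrite <- shift_S, Hs. destruct (ffact w k); cc.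
  - rewrite IHk by lia. destruct w; cc.
Qed.

Theorem theorem4p17 (m : nat) (hm : (1 <= m)%nat) (w : Cplx) :
  ~ root_of_PF m w <-> (inS m w \/ inS m (Cconj w)).
Proof.
  split.
  - intro Hn.
    destruct (classic (exists i, (1 <= i <= m)%nat /\ shift w i = C0)) as [[i [Hi Hz]]|Hnz].
    + exfalso; apply Hn. exists (delta m 1). split; [|split].
      * intros k _; unfold delta; destruct (Nat.eqb k m); lra.
      * exists m; split; [lia|]; unfold delta; rewrite Nat.eqb_refl; lra.
      * rewrite ffpoly_delta by lia. rewrite (ffact_zero w i m Hi Hz). cc.
    + assert (Hs : forall i, (1 <= i <= m)%nat -> shift w i <> C0)
        by (intros i Hi E; apply Hnz; exists i; auto).
      assert (Hw0 : w <> C0).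
      { intro E; apply (Hs 1%nat); [lia|]. rewrite <- E. unfold shift; simpl.
        replace (1 - 1) with 0 by ring. destruct w; cc. }
      destruct (Rle_dec 0 (Cim w)) as [Hw|Hw].
      * left. split; [auto|split].
        -- apply Arg_range; auto.
        -- destruct (Rlt_dec (sumArg w m) PI) as [|Hl]; [auto|].
           exfalso; apply Hn; apply key_root; auto; lra.
      * right. assert (Hc : 0 <= Cim (Cconj w)) by (destruct w; unfold Cconj, Cim in *; simpl in *; lra).
        assert (Hs' : forall i, (1 <= i <= m)%nat -> shift (Cconj w) i <> C0)
          by (intros i Hi; rewrite shift_conj; apply conj_nz; auto).
        split; [auto|split].
        -- apply Arg_range; auto. apply conj_nz; auto.
        -- destruct (Rlt_dec (sumArg (Cconj w) m) PI) as [|Hl]; [auto|].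
           exfalso; apply Hn. rewrite <- (conj_conj w). apply root_conj.
           apply key_root; auto; lra.
  - intros [[Hs [Ha Hsum]]|[Hs [Ha Hsum]]].
    + apply key_noroot; auto. apply Arg_Im; auto.
    + intro Hr. apply (key_noroot m (Cconj w)); auto. apply Arg_Im; auto.
      apply root_conj; auto.
Qed.
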